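(* Let $X$ be a compact metric space and $(f_n)_{n\ge1}$ a sequence of continuous maps $X\to X$ converging uniformly to a function $\phi\colon X\to X$. Then $\phi^q\circ f_1^p=f_1^{p+q}$ for every $p\in\mathbb{N}^*$ and every $q\in\beta(\mathbb{N})$. In particular, the Ellis semigroup $E(X,\phi)$ acts on $E(X,f_{1,\infty})^*$: $h\circ g\in E(X,f_{1,\infty})^*$ for all $h\in E(X,\phi)$ and $g\in E(X,f_{1,\infty})^*$.
   Context: $\mathbb{N}=\{1,2,\dots\}$, $\beta(\mathbb{N})$ the ultrafilters on $\mathbb{N}$ (principal ones identified with $n\in\mathbb{N}$), $\mathbb{N}^*$ the free ones. For $r\in\mathbb{N}^*$, $r\text{-}\lim_n x_n$ is the unique $y$ with $\{n:x_n\in V\}\in r$ for all neighbourhoods $V$ of $y$. $f_1^n=f_n\circ\cdots\circ f_1$, $f_1^r(x)=r\text{-}\lim_n f_1^n(x)$ for $r\in\mathbb{N}^*$, $E(X,f_{1,\infty})^*=\{f_1^r:r\in\mathbb{N}^*\}$. $\phi^n$ is the $n$-fold composition, $\phi^q(x)=q\text{-}\lim_n\phi^n(x)$ for $q\in\mathbb{N}^*$, and $E(X,\phi)$ is the closure of $\{\phi^n:n\in\mathbb{N}\}$ in $X^X$ (pointwise topology), which equals $\{\phi^q:q\in\beta(\mathbb{N})\}$. Addition on $\beta(\mathbb{N})$: $p+q=\{A:\{n:\{m:m+n\in A\}\in p\}\in q\}$. *)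

(* Defs.v *)
From HB Require Import structures.
From mathcomp Require Import all_boot all_order all_algebra.
From mathcomp Require Import all_classical all_reals all_analysis.
From Stdlib Require Import ClassicalEpsilon.
Set Implicit Arguments. Unset Strict Implicit. Unset Printing Implicit Defensive.
Import Order.TTheory GRing.Theory Num.Theory.
Local Open Scope classical_set_scope.
Local Open Scope ring_scope.

(* Ultrafilters on N = {1,2,...}: ultrafilters on nat containing the positive integers. *)
Definition betaN (r : set_system nat) : Prop :=
  UltraFilter r /\ r [set n | (0 < n)%N].

Definition freeU (r : set_system nat) : Prop :=
  betaN r /\ forall n : nat, ~ r [set n].

Definition addU (p q : set_system nat) : set_system nat :=
  [set A | q [set n | p [set m | A (m + n)%N]]].

Definition is_ulim {T : topologicalType} (r : set_system nat) (s : nat -> T) (y : T) : Prop :=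
  forall V, nbhs y V -> r [set n | V (s n)].

(* r-lim_n s_n: "the" y which is an r-limit of s (unique in a Hausdorff space) *)
Definition ulim {T : topologicalType} (r : set_system nat) (s : nat -> T) : T :=
  epsilon (inhabits (s 0%N)) (fun y => is_ulim r s y).

(* f_1^n = f_n o ... o f_1 (f_1^0 = id; f 0 is never used) *)
Fixpoint comp1 {T : Type} (f : nat -> T -> T) (n : nat) : T -> T :=
  match n with
  | 0%N => id
  | k.+1 => f k.+1 \o comp1 f k
  end.

Definition f1r {T : topologicalType} (f : nat -> T -> T) (r : set_system nat) : T -> T :=
  fun x => ulim r (fun n => comp1 f n x).

Definition phiq {T : topologicalType} (phi : T -> T) (q : set_system nat) : T -> T :=
  fun x => ulim q (fun n => iter n phi x).

Definition Estar {T : topologicalType} (f : nat -> T -> T) : set (T -> T) :=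
  [set g | exists r, freeU r /\ g = f1r f r].

Definition Ellis {T : topologicalType} (phi : T -> T) : set (T -> T) :=
  closure ([set iter n phi | n in [set n : nat | (0 < n)%N]] : set {ptws T -> T}).

Definition unif_cvg {R : realType} {T : pseudoMetricType R}
  (f : nat -> T -> T) (phi : T -> T) : Prop :=
  forall e : R, 0 < e -> \forall n \near \oo, forall x : T, ball (phi x) e (f n x).

(* Main.v *)
Require Import Defs.
From HB Require Import structures.
From mathcomp Require Import all_boot all_order all_algebra.
From mathcomp Require Import all_classical all_reals all_analysis.
From mathcomp Require Import ring lra.
From Stdlib Require Import ClassicalEpsilon.
Set Implicit Arguments. Unset Strict Implicit. Unset Printing Implicit Defensive.
Import Order.TTheory GRing.Theory Num.Theory.
Local Open Scope classical_set_scope.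
Local Open Scope ring_scope.

Lemma ulim_ballP (R : realType) (X : pseudoMetricType R) (r : set_system nat)
  (Fr : Filter r) (s : nat -> X) y :
  is_ulim r s y <-> forall e : R, 0 < e -> r [set n | ball y e (s n)].
Proof.
split => [H e e0|H V /nbhs_ballP [e /= e0 sV]].
- by apply: H; exact: nbhsx_ballx.
- by apply: filterS (H e e0) => n; exact: sV.
Qed.

Lemma ulim_spec {T : topologicalType} (r : set_system nat) (s : nat -> T) :
  (exists y, is_ulim r s y) -> is_ulim r s (ulim r s).
Proof. by move=> H; rewrite /ulim; apply: epsilon_spec. Qed.

Lemma ulim_eq {T : topologicalType} (hT : hausdorff_space T)
  (r : set_system nat)
  (Hr : forall A B, r A -> r B -> exists n, A n /\ B n) (s : nat -> T) y :
  is_ulim r s y -> ulim r s = y.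
Proof.
move=> Hy; have Hu : is_ulim r s (ulim r s) by apply: ulim_spec; exists y.
apply: hT => A B nA nB.
have [n [An Bn]] := Hr _ _ (Hu A nA) (Hy B nB).
by exists (s n).
Qed.

Lemma ultra_meet (r : set_system nat) : UltraFilter r ->
  forall A B, r A -> r B -> exists n, A n /\ B n.
Proof.
move=> Ur A B rA rB; have rAB : r (A `&` B) by apply: filterI.
have [n [? ?]] := filter_ex rAB.
by exists n.
Qed.

Lemma ulim_ex {T : topologicalType} (cT : compact [set: T])
  (r : set_system nat) (Ur : UltraFilter r) (s : nat -> T) :
  exists y, is_ulim r s y.
Proof.
have PF : ProperFilter (fmap s r) by apply: fmap_proper_filter.
have [y [_ cy]] := cT (fmap s r) PF (@filterT _ _ _).
exists y => V nV.
case: (in_ultra_setVsetC [set n | V (s n)] Ur) => // rC.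
have [z [nz vz]] := cy (~` V) V rC nV.
by case: nz.
Qed.

Lemma unif_ex (R : realType) (X : pseudoMetricType R) (f : nat -> X -> X) phi :
  unif_cvg f phi -> forall e : R, 0 < e ->
  exists N, forall n, (N <= n)%N -> forall x, ball (phi x) e (f n x).
Proof.
move=> uc e e0; have [N _ HN] := uc e e0.
by exists N => n Nn; apply: HN.
Qed.

Lemma phi_cont (R : realType) (X : pseudoMetricType R) (f : nat -> X -> X) phi :
  (forall n : nat, (0 < n)%N -> continuous (f n)) -> unif_cvg f phi ->
  continuous phi.
Proof.
move=> fc uc a V /nbhs_ballP [e /= e0 sV].
have e3 : 0 < e / 3 by rewrite divr_gt0.
have [N HN] := unif_ex uc e3.
have Hn := HN N.+1 (leqnSn N).
have Hc : nbhs a [set x | ball (f N.+1 a) (e/3) (f N.+1 x)].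
  exact: (fc N.+1 isT a _ (nbhsx_ballx (f N.+1 a) _ e3)).
apply: filterS Hc => x /= bx; apply: sV.
have H := ball_triangle (ball_triangle (Hn a) bx) (ball_sym (Hn x)).
by apply: le_ball H; lra.
Qed.

Lemma free_tail (r : set_system nat) : freeU r ->
  forall N, r [set m | (N <= m)%N].
Proof.
move=> [[Ur _] fr]; elim=> [|N IH].
  by apply: filterS (@filterT _ _ _) => m.
case: (in_ultra_setVsetC [set m | (N.+1 <= m)%N] Ur) => // rC.
exfalso; apply: (fr N).
have rI : r ([set m | (N <= m)%N] `&` ~` [set m | (N.+1 <= m)%N]).
  by apply: filterI.
apply: filterS rI => m [/= h1 h2].
have : (m <= N)%N by rewrite leqNgt; exact/negP.
by move=> h3; apply/eqP; rewrite eqn_leq h1 h3.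
Qed.

Lemma iter_claim (R : realType) (X : pseudoMetricType R) (f : nat -> X -> X) phi
  (p : set_system nat) (x y : X) :
  (forall n : nat, (0 < n)%N -> continuous (f n)) -> unif_cvg f phi ->
  freeU p -> is_ulim p (fun m => comp1 f m x) y ->
  forall n, is_ulim p (fun m => comp1 f (m + n) x) (iter n phi y).
Proof.
move=> fc uc fp Hy; have [[Up _] _] := fp.
have PFp : ProperFilter p by case: Up.
have Fp : Filter p by case: PFp.
have pc := phi_cont fc uc.
elim=> [|n IH].
  have -> : (fun m => comp1 f (m + 0) x) = (fun m => comp1 f m x).
    by apply: funext => m; rewrite addn0.
  exact: Hy.
apply/ulim_ballP => e e0.
have e2 : 0 < e / 2 by rewrite divr_gt0.
have [N HN] := unif_ex uc e2.
have H1 : p [set m | ball (phi (iter n phi y)) (e / 2)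
                      (phi (comp1 f (m + n) x))].
  apply: (IH [set z | ball (phi (iter n phi y)) (e / 2) (phi z)]).
  exact: (pc (iter n phi y) _ (nbhsx_ballx _ _ e2)).
have H2 := free_tail fp N.
have H12 := @filterI _ p Fp _ _ H1 H2.
apply: (@filterS _ p Fp _ _ _ H12) => m [/= b1 b2].
rewrite addnS /=.
have b3 := HN (m + n).+1 (leq_trans b2 (leq_trans (leq_addr n m) (leqnSn _)))
  (comp1 f (m + n) x).
have := ball_triangle b1 b3.
by rewrite -splitr.
Qed.

Lemma double_lim (R : realType) (X : pseudoMetricType R) (p q : set_system nat)
  (Fp : Filter p) (Fq : Filter q) (s z : nat -> X) w :
  (forall n, is_ulim p (fun m => s (m + n)%N) (z n)) -> is_ulim q z w ->
  is_ulim (addU p q) s w.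
Proof.
move=> Hz Hq V /nbhs_ballP [e /= e0 sV].
have e2 : 0 < e / 2 by rewrite divr_gt0.
rewrite /addU /=.
apply: filterS (Hq _ (nbhsx_ballx w _ e2)) => n /= bn.
apply: filterS (Hz n _ (nbhsx_ballx (z n) _ e2)) => m /= bm.
apply: sV; rewrite [e]splitr; exact: ball_triangle bn bm.
Qed.

Lemma addU_ultra (p q : set_system nat) :
  UltraFilter p -> UltraFilter q -> UltraFilter (addU p q).
Proof.
move=> Up Uq.
have PFp : ProperFilter p by case: Up.
have Fp : Filter p by case: PFp.
have PFq : ProperFilter q by case: Uq.
have Fq : Filter q by case: PFq.
have Fa : Filter (addU p q).
  split.
  - rewrite /addU /=; apply: filterS (@filterT _ q Fq) => n _.
    exact: filterS (@filterT _ p Fp).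
  - move=> A B; rewrite /addU /= => qA qB.
    apply: filterS (@filterI _ q Fq _ _ qA qB) => n [/= pA pB].
    exact: (@filterI _ p Fp _ _ pA pB).
  - move=> A B AB; rewrite /addU /= => qA.
    apply: filterS qA => n /= pA; apply: filterS pA => m /=; exact: AB.
have PFa : ProperFilter (addU p q).
  split => //; rewrite /addU /= => q0.
  have [n /= pn] := filter_ex q0.
  by have [m /=] := filter_ex pn.
split => // G PFG sG.
have FG : Filter G by case: PFG.
rewrite predeqE => A; split; last exact: sG.
move=> GA.
case: (in_ultra_setVsetC [set n | p [set m | A (m + n)%N]] Uq) => // qC.
exfalso.
have aC : addU p q (~` A).
  rewrite /addU /=; apply: filterS qC => n /= npn.
  case: (in_ultra_setVsetC [set m | A (m + n)%N] Up) => // pC.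
have GC := sG _ aC.
have G0 := @filterI _ G FG _ _ GA GC.
have [z [? ?]] := filter_ex G0.
by [].
Qed.

Lemma addU_free (p q : set_system nat) : freeU p -> betaN q -> freeU (addU p q).
Proof.
move=> [[Up pP] fp] [Uq qP].
have PFp : ProperFilter p by case: Up.
have Fp : Filter p by case: PFp.
have PFq : ProperFilter q by case: Uq.
have Fq : Filter q by case: PFq.
split; first split.
- exact: addU_ultra.
- rewrite /addU /=; apply: filterS (@filterT _ q Fq) => n _.
  apply: filterS pP => m /= m0.
  by rewrite addn_gt0 m0.
- move=> k; rewrite /addU /= => qk.
  have [n /= pn] := filter_ex qk.
  apply: (fp (k - n)%N); apply: filterS pn => m /= <-.
  by rewrite addnK.
Qed.

Lemma part1 (R : realType) (X : metricType R)
  (f : nat -> X -> X) (phi : X -> X) :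
  compact [set: X] ->
  (forall n : nat, (0 < n)%N -> continuous (f n)) ->
  unif_cvg f phi ->
  (forall p q : set_system nat, freeU p -> betaN q ->
     phiq phi q \o f1r f p = f1r f (addU p q)).
Proof.
move=> cX fc uc p q fp bq.
have [[Up _] _] := fp; have [Uq _] := bq.
have PFp : ProperFilter p by case: Up.
have Fp : Filter p by case: PFp.
have PFq : ProperFilter q by case: Uq.
have Fq : Filter q by case: PFq.
apply: funext => x /=.
set y := f1r f p x.
have Hy : is_ulim p (fun m => comp1 f m x) y.
  by apply: ulim_spec; apply: ulim_ex.
set w := phiq phi q y.
have Hw : is_ulim q (fun n => iter n phi y) w.
  by apply: ulim_spec; apply: ulim_ex.
have Ha : is_ulim (addU p q) (fun m => comp1 f m x) w.
  apply: (double_lim Fp Fq _ Hw) => n.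
  exact: iter_claim.
apply/esym; apply: (ulim_eq (@metric_hausdorff _ X)) Ha.
by apply: ultra_meet; apply: addU_ultra.
Qed.

Lemma ellis_phiq (R : realType) (X : metricType R) (phi : X -> X) (h : X -> X) :
  compact [set: X] -> Ellis phi h -> exists q, betaN q /\ h = phiq phi q.
Proof.
move=> cX Eh.
pose F0 : set_system nat := [set A | exists2 B : set {ptws X -> X},
  nbhs (h : {ptws X -> X}) B &
  [set n | (0 < n)%N /\ B (iter n phi)] `<=` A].
have PF0 : ProperFilter F0.
  split.
  - move=> [B nB sB].
    have [g [[n /= n0 <-] Bg]] := Eh B nB.
    exact: (sB n).
  - split.
    + by exists setT; [exact: filterT|].
    + move=> A1 A2 [B1 n1 s1] [B2 n2 s2].
      exists (B1 `&` B2); first exact: filterI.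
      by move=> n [/= n0 [b1 b2]]; split; [apply: s1|apply: s2].
    + move=> A1 A2 A12 [B nB sB]; exists B => //.
      by move=> n /sB; apply: A12.
have [q [Uq sq]] := ultraFilterLemma PF0.
exists q; split.
  split => //; apply: sq; exists setT; first exact: filterT.
  by move=> n [].
apply: funext => x.
apply/esym; apply: (ulim_eq (@metric_hausdorff _ X)); first exact: ultra_meet.
move=> V nV; apply: sq.
exists (proj x @^-1` V); first exact: (@proj_continuous X (fun _ => X) x h _ nV).
by move=> n [].
Qed.

Theorem theorem3p9 (R : realType) (X : metricType R)
  (f : nat -> X -> X) (phi : X -> X) :
  compact [set: X] ->
  (forall n : nat, (0 < n)%N -> continuous (f n)) ->
  unif_cvg f phi ->
  (forall p q : set_system nat, freeU p -> betaN q ->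
     phiq phi q \o f1r f p = f1r f (addU p q)) /\
  (forall h g : X -> X, Ellis phi h -> Estar f g -> Estar f (h \o g)).
Proof.
move=> cX fc uc; split; first exact: part1.
move=> h g Eh [p [fp ->]].
have [q [bq ->]] := ellis_phiq cX Eh.
exists (addU p q); split; first exact: addU_free.
exact: part1.
Qed.
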